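(* If $n\ge4$ and $h$ is even with $h\ge\frac{2(n-1)}{n-3}$, then there exists $p\in\mathcal P$ such that $D_{\mu(p)}(p)=D_{\mu(p^r)}(p^r)=\{n\}$.
   Context: Let $n,h\ge2$ be integers, $N=\{1,\dots,n\}$, $H=\{1,\dots,h\}$. $\mathcal P$ is the set of $h$-tuples $p=(p_1,\dots,p_h)$ of linear orders on $N$; $p^r$ is obtained by reversing each $p_i$; $x>_{p_i}y$ means $x\ne y$ and $p_i$ ranks $x$ above $y$. For an integer $\mu$ with $h/2<\mu\le h$, $D_\mu(p)=\{x\in N: \forall y\in N,\ |\{i: y>_{p_i}x\}|<\mu\}$, and $\mu(p)=\min\{\mu\in\mathbb N\cap(h/2,h]: D_\mu(p)\neq\varnothing\}$. *)

(* Defs.v *)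
From mathcomp Require Import all_boot.
Set Implicit Arguments. Unset Strict Implicit. Unset Printing Implicit Defensive.

(* Voters H = {1..h} are 'I_h, alternatives N = {1..n} are 'I_n
   (alternative k in the paper is the ordinal with value k-1).
   A linear order p_i is given by its strict part: r x y  <->  x >_{p_i} y. *)

Definition is_linear_order (n : nat) (r : rel 'I_n) : Prop :=
  irreflexive r /\ transitive r /\ (forall x y : 'I_n, x != y -> r x y || r y x).

Definition profile (n h : nat) := 'I_h -> rel 'I_n.

Definition is_profile (n h : nat) (p : profile n h) : Prop :=
  forall i, is_linear_order (p i).

Definition rev_profile (n h : nat) (p : profile n h) : profile n h :=
  fun i x y => p i y x.

Definition inD (n h : nat) (mu : nat) (p : profile n h) (x : 'I_n) : bool :=
  [forall y : 'I_n, #|[set i : 'I_h | p i y x]| < mu].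

Definition D_nonempty (n h : nat) (mu : nat) (p : profile n h) : bool :=
  [exists x : 'I_n, inD mu p x].

(* mu(p) = min { mu in N : h/2 < mu <= h, D_mu(p) <> empty }
   (the list is increasing, so its head is the minimum; the default h is
   never used for genuine profiles with h >= 1, since D_h(p) is nonempty). *)
Definition mu_of (n h : nat) (p : profile n h) : nat :=
  head h [seq m <- iota 0 h.+1 | (h < m.*2) && D_nonempty m p].

(* Main.v *)
Require Import Defs.
From mathcomp Require Import all_boot.
From mathcomp Require Import zify.

Definition rk (m k : nat) (i : nat) (x : nat) : nat :=
  if x == m then (if i < k then m.+1 else 0)
  else if i %/ k.-1 <= x then x - i %/ k.-1 + 1 else x + m - i %/ k.-1 + 1.

Definition prof (m k : nat) : profile m.+1 k.*2 :=
  fun i x y => rk m k i y < rk m k i x.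

Definition sc (m u : nat) := if u.+1 < m then u.+1 else 0.

Lemma rk_inj m k i x y : x <= m -> y <= m -> i %/ k.-1 < m ->
  rk m k i x = rk m k i y -> x = y.
Proof.
move=> hx hy hr; rewrite /rk.
move: (i %/ k.-1) hr => r hr.
repeat case: ifP; move=> *; lia.
Qed.

Lemma succ_beats m k u i : 3 <= m -> u < m -> i %/ k.-1 < m ->
  i %/ k.-1 != sc m u -> rk m k i u < rk m k i (sc m u).
Proof.
move=> hm hu hr; rewrite /rk /sc.
move: (i %/ k.-1) hr => r hr.
repeat case: ifP; move=> *; lia.
Qed.

Lemma w_top m k i y : y <= m -> rk m k i m < rk m k i y -> k <= i.
Proof. rewrite /rk eqxx; move: (i %/ k.-1) => r; repeat case: ifP; move=> *; lia. Qed.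

Lemma w_bot m k i y : y <= m -> rk m k i y < rk m k i m -> i < k.
Proof. rewrite /rk eqxx; move: (i %/ k.-1) => r; repeat case: ifP; move=> *; lia. Qed.

Lemma card_bound h (A : {set 'I_h}) (f : 'I_h -> nat) b :
  {in A &, injective f} -> (forall i, i \in A -> f i < b) -> #|A| <= b.
Proof.
move=> finj fb.
have -> : #|A| = size (map f (enum A)) by rewrite size_map cardE.
rewrite -(size_iota 0 b); apply: uniq_leq_size.
  rewrite map_inj_in_uniq ?enum_uniq //.
  by move=> x y; rewrite !mem_enum; apply: finj.
move=> z /mapP [x]; rewrite mem_enum => xA ->.
by rewrite mem_iota add0n fb.
Qed.

Lemma mu_of_k m k (q : profile m.+1 k.*2) : 0 < k -> D_nonempty k.+1 q ->
  mu_of q = k.+1.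
Proof.
move=> k0 hD; rewrite /mu_of.
have -> : (k.*2).+1 = k.+1 + k by lia.
rewrite iotaD filter_cat.
rewrite (@eq_in_filter _ _ pred0 (iota 0 k.+1)) ?filter_pred0; last first.
  move=> x; rewrite mem_iota => hx /=; apply/negbTE; apply/nandP; left; lia.
have -> : iota (0 + k.+1) k = k.+1 :: iota k.+2 k.-1.
  by rewrite add0n; case: (k) k0.
rewrite /= hD andbT; case: ifP => //; lia.
Qed.

Theorem proposition9 (n h : nat) :
  4 <= n -> ~~ odd h -> 2 * (n - 1) <= h * (n - 3) ->
  exists p : profile n h,
    is_profile p /\
    (forall x : 'I_n, inD (mu_of p) p x = (val x == n.-1)) /\
    (forall x : 'I_n, inD (mu_of (rev_profile p)) (rev_profile p) x = (val x == n.-1)).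
Proof.
case: n => [//|m] hm.
move=> hodd hc.
have [k hk2] : exists k, h = k.*2.
  exists h./2; have := odd_double_half h.
  by move=> e; rewrite -{1}e (negbTE hodd) add0n.
subst h.
have hm3 : 3 <= m by lia.
have hbig : k.*2 <= m * k.-1 by nia.
have hk : 2 <= k by nia.
have hr : forall i : 'I_(k.*2), i %/ k.-1 < m.
  move=> i; rewrite ltn_divLR; last by lia.
  have := ltn_ord i; lia.
have hle : forall x : 'I_m.+1, x <= m by move=> x; have := ltn_ord x; lia.
have cnt_rot : forall s, #|[set i : 'I_(k.*2) | i %/ k.-1 == s]| <= k.-1.
  move=> s; apply: (@card_bound _ _ (fun i => val i %% k.-1)).
    move=> x y; rewrite !inE => /eqP hx /eqP hy e; apply/val_inj => /=.
    by rewrite (divn_eq x k.-1) (divn_eq y k.-1) hx hy e.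
  by move=> i _; rewrite ltn_mod; lia.
have cnt_hi : #|[set i : 'I_(k.*2) | k <= i]| <= k.
  apply: (@card_bound _ _ (fun i => val i - k)).
    move=> x y; rewrite !inE => hx hy /= e; apply/val_inj => /=; lia.
  by move=> i; rewrite inE /= => hi; have := ltn_ord i; lia.
have cnt_lo : #|[set i : 'I_(k.*2) | i < k]| <= k.
  apply: (@card_bound _ _ (fun i => val i)).
    by move=> x y _ _; apply: val_inj.
  by move=> i; rewrite inE.
have beat : forall u : 'I_m.+1, u < m ->
    k.+1 <= #|[set i : 'I_(k.*2) | prof m k i (inord (sc m u)) u]|.
  move=> u hu.
  have hsc : sc m u < m.+1 by rewrite /sc; case: ifP; lia.
  have sub : ~: [set i : 'I_(k.*2) | i %/ k.-1 == sc m u] \subset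
             [set i : 'I_(k.*2) | prof m k i (inord (sc m u)) u].
    apply/subsetP => i; rewrite !inE => hi.
    by rewrite /prof inordK // succ_beats.
  have := subset_leq_card sub.
  have := cardsC [set i : 'I_(k.*2) | i %/ k.-1 == sc m u].
  rewrite card_ord; have := cnt_rot (sc m u); lia.
exists (prof m k); split.
  move=> i; split; first by move=> x; rewrite /prof ltnn.
  split; first by move=> y x z; rewrite /prof => h1 h2; apply: ltn_trans h2 h1.
  move=> x y hxy; rewrite /prof.
  case: (ltngtP (rk m k i y) (rk m k i x)) => // e.
  by move: hxy; rewrite (val_inj (@rk_inj m k i x y (hle x) (hle y) (hr i) (esym e))) eqxx.
have wtop : forall y : 'I_m.+1,
    #|[set i : 'I_(k.*2) | prof m k i y (inord m)]| <= k.
  move=> y; apply: leq_trans cnt_hi; apply: subset_leq_card.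
  apply/subsetP => i; rewrite !inE /prof inordK //.
  exact: (@w_top m k i y (hle y)).
have wbot : forall y : 'I_m.+1,
    #|[set i : 'I_(k.*2) | prof m k i (inord m) y]| <= k.
  move=> y; apply: leq_trans cnt_lo; apply: subset_leq_card.
  apply/subsetP => i; rewrite !inE /prof inordK //.
  exact: (@w_bot m k i y (hle y)).
have Dw : inD k.+1 (prof m k) (inord m).
  by apply/forallP => y; rewrite ltnS wtop.
have Dwr : inD k.+1 (rev_profile (prof m k)) (inord m).
  apply/forallP => y; rewrite ltnS.
  exact: wbot.
have k0 : 0 < k by lia.
split.
  rewrite mu_of_k //; last by apply/existsP; exists (inord m).
  move=> x /=; case: eqP => ex.
    by have -> : x = inord m by apply/val_inj; rewrite /= inordK.
  have xm : x < m by have := hle x; lia.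
  apply/negbTE/negP => /forallP /(_ (inord (sc m x))).
  by have := beat x xm; lia.
rewrite mu_of_k //; last by apply/existsP; exists (inord m).
move=> x /=; case: eqP => ex.
  by have -> : x = inord m by apply/val_inj; rewrite /= inordK.
have xm : x < m by have := hle x; lia.
pose pu := if (x : nat) == 0 then m.-1 else (x : nat).-1.
have hpu : pu < m by rewrite /pu; case: eqP; lia.
have scpu : inord (sc m pu) = x :> 'I_m.+1.
  apply/val_inj; rewrite /= inordK /sc /pu; case: eqP; case: ifP; lia.
have := beat (inord pu); rewrite inordK ?scpu; last by lia.
move=> /(_ hpu) hb.
apply/negbTE/negP => /forallP /(_ (inord pu)).
rewrite /rev_profile; lia.
Qed.
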